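(* Let $U$ be a countably infinite universe, $\mathcal{C}=(L_1,L_2,\ldots)$ a countably infinite collection of languages over $U$, let $m^\star(L_i)$ and the orderings $\mathcal{C}'_i$ be as computed by the Procedure described in the context, and fix a non-decreasing $f:\mathbb{N}\to\mathbb{N}$ with $\lim_{t\to\infty}f(t)=\infty$. Then the Algorithm described in the context (with this $f$) non-uniformly generates from $\mathcal{C}$ with generation time $t^\star(L_i)=\max(g(i),m^\star(L_i)+1)$ for every $i$, where $g(i)$ is the smallest $j$ with $f(j)\ge i$; that is, for every $i$, every enumeration of $L_i$, and every $t$ with $|S_t|\ge t^\star(L_i)$, the output $z_t$ belongs to $L_i\setminus S_t$.
   Context: A language is an infinite subset of $U$. A collection is a sequence of languages; repetitions are allowed and entries are distinguished by their index. An enumeration of a language $L$ is a sequence $x_1,x_2,\ldots$ with every $x_t\in L$ and every $x\in L$ equal to some $x_t$. A generating algorithm at each time $t\ge1$ receives $x_1,\ldots,x_t$ and outputs $z_t\in U$; $S_t$ is the set of distinct strings among $x_1,\ldots,x_t$. An algorithm non-uniformly generates from $\mathcal{C}$ with generation times $t(L_i)$ if for every $i$ and every enumeration of $L_i$, $z_t\in L_i\setminus S_t$ whenever $|S_t|\ge t(L_i)$. Procedure. Set $\mathcal{C}'_0=()$. For $i=1,2,3,\ldots$: append the entry $L_i$ at the end of $\mathcal{C}'_{i-1}$ to get $\mathcal{C}'_i=(L'_1,\ldots,L'_i)$ (a permutation of the entries $L_1,\ldots,L_i$), and set $j=i$. Repeat: (1) among all subcollections $\mathcal{D}$ of the entries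 $(L'_1,\ldots,L'_j)$ that include the entry $L'_j$ and satisfy $|\bigcap_{L\in\mathcal{D}}L|<\infty$, let $\mathcal{C}_{\mathrm{chk}}$ be one maximizing $|\bigcap_{L\in\mathcal{D}}L|$ and $m_{\mathrm{chk}}$ this maximum; if no such $\mathcal{D}$ exists, set $\mathcal{C}_{\mathrm{chk}}=()$, $m_{\mathrm{chk}}=0$. (2) If $j\le1$ or $m_{\mathrm{chk}}>m^\star(L'_{j-1})$ (the entry $L'_{j-1}$ has original index $<i$, so its value $m^\star$ is already fixed), stop the loop. (3) Otherwise swap the entries at positions $j-1$ and $j$ in $\mathcal{C}'_i$, set $j\leftarrow j-1$ and return to (1). When the loop stops, set $\mathcal{C}(L_i)=\mathcal{C}_{\mathrm{chk}}$ and $m^\star(L_i)=m_{\mathrm{chk}}$ (these are attached to index $i$). Algorithm (with parameter $f$). At time $t$, run the first $f(t)$ iterations of the Procedure to obtain $\mathcal{C}'_{f(t)}=(L'_1,\ldots,L'_{f(t)})$. Initialize $I_t=()$ and for $j=1,\ldots,f(t)$ in order: if $S_t\subseteq L'_j$ and $|\bigcap_{L\in I_t\cup\{L'_j\}}L|=\infty$, append $L'_j$ to $I_t$. If $I_t$ is empty, output an arbitrary string of $U\setminus S_t$; otherwise output a string of $(\bigcap_{L\in I_t}L)\setminus S_t$. *)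

(* Defs.v *)
From mathcomp Require Import all_boot.
From mathcomp Require Import finmap.
From mathcomp Require Import boolp classical_sets cardinality.

Set Implicit Arguments.
Unset Strict Implicit.
Unset Printing Implicit Defensive.

Local Open Scope classical_set_scope.

(* Conventions: the universe is a countable type [U]; the collection is a
   sequence [L : nat -> set U] of which only the entries L 1, L 2, ... are
   used (index 0 is ignored).  Times are t = 1, 2, ...; an input sequence is
   [x : nat -> U] of which x 1, x 2, ... are used. *)

Section Defs.
Variable U : countType.
Variable L : nat -> set U.

Definition inter (D : seq nat) : set U := fun u => forall k, k \in D -> L k u.

Definition fcard (A : set U) : nat := #|` fset_set A|.

(* m_chk for the entry with index [i] placed right after the entries [q]:
   maximum of |\bigcap D| over subcollections D of (q, i) containing i whose
   intersection is finite; 0 if no such D *)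
Definition mchk (q : seq nat) (i : nat) : nat :=
  \max_(b : (size q).-tuple bool | `[< finite_set (inter (i :: mask b q)) >])
     fcard (inter (i :: mask b q)).

(* The swap loop for the new entry i, the previous ordering being [p]
   (a list of original indices) with already fixed values [ms].  [bubble k]
   is the loop when the new entry is at position j = k+1 (k entries before
   it); it returns (final k, m_chk). *)
Fixpoint bubble (p : seq nat) (ms : nat -> nat) (i : nat) (k : nat)
  : nat * nat :=
  match k with
  | 0 => (0, mchk [::] i)
  | k'.+1 =>
      let mc := mchk (take k p) i in
      if ms (nth 0 p k') < mc then (k, mc) else bubble p ms i k'
  end.

(* First n iterations of the Procedure: the ordering C'_n (as the list of
   original indices of L'_1, ..., L'_n) and the values m^*(L_a), a <= n. *)
Fixpoint proc (n : nat) : seq nat * (nat -> nat) :=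
  match n with
  | 0 => ([::], fun _ => 0)
  | n'.+1 =>
      let p := (proc n').1 in
      let ms := (proc n').2 in
      let km := bubble p ms n (size p) in
      (take km.1 p ++ n :: drop km.1 p,
       fun a => if a == n then km.2 else ms a)
  end.

Definition ordering (n : nat) : seq nat := (proc n).1.
Definition mstar (i : nat) : nat := (proc i).2 i.

Definition Sseq (x : nat -> U) (t : nat) : seq U := [seq x k | k <- iota 1 t].
Definition cardS (x : nat -> U) (t : nat) : nat := size (undup (Sseq x t)).

Definition build_I (S : seq U) (p : seq nat) : seq nat :=
  foldl (fun I j =>
           if `[< (forall u, u \in S -> L j u) /\
                  ~ finite_set (inter (rcons I j)) >]
           then rcons I j else I) [::] p.

Definition alg_output (f : nat -> nat) (x : nat -> U) (t : nat) (z : U) : Prop :=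
  let S := Sseq x t in
  let I := build_I S (ordering (f t)) in
  (if I is [::] then True else inter I z) /\ z \notin S.

Definition enumerates (x : nat -> U) (A : set U) : Prop :=
  (forall t, (1 <= t)%N -> A (x t)) /\
  (forall u, A u -> exists2 t, (1 <= t)%N & x t = u).

End Defs.

(* Main.v *)
Require Import Defs.
From mathcomp Require Import all_boot finmap.
From mathcomp Require Import boolp classical_sets cardinality.
From mathcomp Require Import zify.

Local Open Scope classical_set_scope.

Section Aux.
Variable U : countType.
Variable L : nat -> set U.

Lemma inter_eq D1 D2 : (forall k, (k \in D1) = (k \in D2)) -> inter L D1 = inter L D2.
Proof.
move=> H; apply/seteqP; split => u Hu k Hk; apply: Hu; by rewrite ?H // -H.
Qed.

Lemma mchk_ge q i D : {subset D <= q} -> finite_set (inter L (i :: D)) ->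
  (Defs.fcard (inter L (i :: D)) <= mchk L q i)%N.
Proof.
move=> Hsub fin.
have E : inter L (i :: mask (map_tuple (fun y => y \in D) (in_tuple q)) q)
          = inter L (i :: D).
  apply: inter_eq => k; rewrite /= -filter_mask !inE mem_filter.
  case: (k \in D) / boolP => kD /=; rewrite ?andbT ?andbF ?Hsub //.
rewrite /mchk -E; apply: (leq_bigmax_cond (P := fun b : (size q).-tuple bool =>
   `[< finite_set (inter L (i :: mask b q)) >])
   (F := fun b : (size q).-tuple bool => Defs.fcard (inter L (i :: mask b q)))).
by apply/asboolP; rewrite E.
Qed.

Lemma in_take_index (d : nat) p K : (index d p < K)%N -> (K <= size p)%N -> d \in take K p.
Proof.
move=> H1 H2; move: H1; rewrite -{1}(cat_take_drop K p) index_cat.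
case: ifP => // _; rewrite size_takel //; lia.
Qed.

Lemma index_take_lt (d : nat) p K : d \in take K p -> (index d p < K)%N.
Proof.
move=> H; rewrite -{1}(cat_take_drop K p) index_cat H.
have h : (index d (take K p) < size (take K p))%N by rewrite index_mem.
rewrite size_take in h.
by apply: (leq_trans h); apply: geq_minl.
Qed.

Lemma idx_ins (p : seq nat) n k d : n \notin p -> (k <= size p)%N ->
  index d (take k p ++ n :: drop k p) =
  if d == n then k else if (index d p < k)%N then index d p else (index d p).+1.
Proof.
move=> np kp; rewrite index_cat.
case: ifP => dt.
  have dn : d != n by apply: contraNneq np => <-; apply: mem_take dt.
  rewrite (negbTE dn) index_take_lt //.
  by rewrite -{2}(cat_take_drop k p) index_cat dt.
have -> : index d p = k + index d (drop k p).
  by rewrite -{1}(cat_take_drop k p) index_cat dt size_takel.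
rewrite size_takel //= eq_sym; case: eqP => _; first by rewrite addn0.
have -> : (k + index d (drop k p) < k)%N = false by lia.
by rewrite addnS.
Qed.

Definition Inv (p : seq nat) (ms : nat -> nat) :=
  forall a, a \in p -> forall D, (forall d, d \in D -> (index d p < index a p)%N) ->
    finite_set (inter L (a :: D)) -> (Defs.fcard (inter L (a :: D)) <= ms a)%N.

Lemma bubble_spec p ms n K : (K <= size p)%N ->
  let r := bubble L p ms n K in
  [/\ (r.1 <= K)%N, r.2 = mchk L (take r.1 p) n &
   forall j, (r.1 <= j)%N -> (j < K)%N -> (mchk L (take j.+1 p) n <= ms (nth 0 p j))%N].
Proof.
elim: K => [|K IH] HK /=.
  by split; [ | rewrite take0 | move=> j _; rewrite ltn0].
case: ltnP => H /=.
  by split => // j; lia.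
have [h1 h2 h3] := IH (ltnW HK).
split => //; first lia.
move=> j hj; rewrite ltnS leq_eqVlt => /orP [/eqP ->|]; first by [].
by apply: h3.
Qed.

Lemma proc_bound n : forall a, a \in (proc L n).1 -> (1 <= a <= n)%N.
Proof.
elim: n => [|n IH] a //=.
rewrite mem_cat inE => /orP [/mem_take/IH|/orP [/eqP ->|/mem_drop/IH]]; lia.
Qed.

Lemma proc_mem n a : (1 <= a <= n)%N -> a \in (proc L n).1.
Proof.
elim: n => [|n IH] Ha; first lia.
rewrite /= mem_cat inE.
case: (a =P n.+1) => [->|ne]; first by rewrite ?eqxx ?orbT.
have : a \in (proc L n).1 by apply: IH; lia.
rewrite -{1}(cat_take_drop (bubble L (proc L n).1 (proc L n).2 n.+1 (size (proc L n).1)).1 (proc L n).1).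
by rewrite mem_cat => /orP [->|->]; rewrite ?orbT.
Qed.

Lemma proc_mstar n a : (1 <= a <= n)%N -> (proc L n).2 a = mstar L a.
Proof.
elim: n => [|n IH] Ha; first lia.
case: (a =P n.+1) => [->|ne]; first by [].
rewrite /=; have -> : (a == n.+1) = false by apply/eqP.
apply: IH; move/andP: Ha => [h1 h2]; apply/andP; split => //; lia.
Qed.

Lemma proc_inv n : Inv (proc L n).1 (proc L n).2.
Proof.
elim: n => [|n IH]; first by [].
rewrite /=.
set p := (proc L n).1; set ms := (proc L n).2.
have np : n.+1 \notin p by apply/negP => /proc_bound; lia.
have [h1 h2 h3] := @bubble_spec p ms n.+1 (size p) (leqnn (size p)).
set r := bubble L p ms n.+1 (size p) in h1 h2 h3 *.
case: r h1 h2 h3 => k m /= h1 h2 h3.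
move=> a; rewrite mem_cat inE => Ha D HD fin.
have IDX := fun d => idx_ins p n.+1 k d np h1.
case: (a =P n.+1) => [ea|nea].
  subst a.
  rewrite h2; apply: mchk_ge => // d dD.
  have := HD d dD; rewrite !IDX eqxx.
  case: (d =P n.+1) => [->|_]; first by rewrite ltnn.
  case: ifP => H1 H2; first by apply: in_take_index H1 h1.
  lia.
have ap : a \in p.
  case/orP: Ha => [/mem_take //|/orP [/eqP //|/mem_drop //]].
have ja : (index a p < size p)%N by rewrite index_mem.
case: (n.+1 \in D) / boolP => nD; last first.
  apply: (IH a ap) => // d dD; rewrite -/p; have := HD d dD; rewrite !IDX.
  have -> : (a == n.+1) = false by apply/eqP.
  case: (d =P n.+1) => [ed|_]; first by rewrite -ed dD in nD.
  move=> HH; move: HH; case: ifP => H1; case: ifP => H2; lia.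
have Hak : (k <= index a p)%N.
  rewrite leqNgt; apply/negP => Hlt.
  have := HD n.+1 nD; rewrite !IDX eqxx.
  have -> : (a == n.+1) = false by apply/eqP.
  by rewrite Hlt; lia.
set j := index a p in ja Hak.
have E : inter L (a :: D) = inter L (n.+1 :: (a :: filter (predC1 n.+1) D)).
  apply: inter_eq => k'; rewrite !inE mem_filter /=.
  case: (k' =P n.+1) => [->|_] /=; first by rewrite nD !orbT.
  by [].
have Hm : ms (nth 0 p j) = ms a by rewrite /j nth_index.
rewrite -Hm E; apply: leq_trans (h3 j Hak ja).
apply: mchk_ge; last by rewrite -E.
move=> d; rewrite inE mem_filter => /orP [/eqP ->|/andP [dn dD]].
  by apply: in_take_index => //; rewrite /j.
apply: in_take_index => //.
have := HD d dD; rewrite !IDX (negbTE dn).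
have -> : (a == n.+1) = false by apply/eqP.
rewrite /j; move=> HH; move: HH; case: ifP => H1; case: ifP => H2; lia.
Qed.

End Aux.

Section Build.
Variable U : countType.
Variable L : nat -> set U.
Variable S : seq U.

Definition stepF (I : seq nat) (j : nat) :=
  if `[< (forall u, u \in S -> L j u) /\ ~ finite_set (inter L (rcons I j)) >]
  then rcons I j else I.

Lemma foldl_sub s I0 : {subset I0 <= foldl stepF I0 s}.
Proof.
elim: s I0 => [|x s IH] I0 y Hy //=.
apply: IH; rewrite /stepF; case: ifP => _ //.
by rewrite mem_rcons inE Hy orbT.
Qed.

Lemma foldl_elems s I0 y : y \in foldl stepF I0 s ->
  y \in I0 \/ (y \in s /\ forall u, u \in S -> L y u).
Proof.
elim: s I0 => [|x s IH] I0 /=; first by left.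
move/IH => [|[ys Hy]]; last by right; rewrite inE ys orbT.
rewrite /stepF; case: ifP => [/asboolP [HS _]|_]; last by left.
rewrite mem_rcons inE => /orP [/eqP ->|]; last by left.
by right; rewrite inE eqxx.
Qed.

End Build.

Theorem mainTheorem2 (U : countType) (L : nat -> set U) (f : nat -> nat)
  (HU : ~ finite_set [set: U])
  (HL : forall i, (1 <= i)%N -> ~ finite_set (L i))
  (Hf_mono : {homo f : m n / (m <= n)%N >-> (m <= n)%N})
  (Hf_lim : forall M, exists T, forall t, (T <= t)%N -> (M <= f t)%N)
  (z : (nat -> U) -> nat -> U) (* z x t : the output at time t on input x *)
  (Hz : forall x t, (1 <= t)%N -> alg_output L f x t (z x t)) :
  forall i, (1 <= i)%N ->
  forall gi, (1 <= gi)%N -> (i <= f gi)%N ->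
    (forall j, (1 <= j)%N -> (i <= f j)%N -> (gi <= j)%N) ->
  forall x, enumerates x (L i) ->
  forall t, (1 <= t)%N -> (maxn gi (mstar L i).+1 <= cardS x t)%N ->
    L i (z x t) /\ z x t \notin Sseq x t.
Proof.
move=> i i1 gi gi1 igi gimin x [xL _] t t1 Hcard.
have [Hout znS] := Hz x t t1.
split => //.
set S := Sseq x t in Hout znS.
have ct : (cardS x t <= t)%N.
  by rewrite /cardS (leq_trans (size_undup _)) // size_map size_iota.
have ift : (i <= f t)%N.
  apply: leq_trans igi (Hf_mono _ _ _); move: Hcard; rewrite geq_max; lia.
set p0 := ordering L (f t).
have ip : i \in p0 by apply: proc_mem; rewrite i1 ift.
have Hinv := proc_inv U L (f t).
have Hms : (proc L (f t)).2 i = mstar L i by apply: proc_mstar; rewrite i1 ift.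
set k := index i p0.
have kp : (k < size p0)%N by rewrite index_mem.
have Edec : p0 = take k p0 ++ i :: drop k.+1 p0.
  by rewrite -(nth_index 0 ip) -/k -(drop_nth 0 kp) cat_take_drop.
set I1 := foldl (stepF U L S) [::] (take k p0).
have SL : forall u, u \in S -> L i u.
  by move=> u /mapP [k' + ->]; rewrite mem_iota => /andP [h1 _]; apply: xL.
have HI1 := foldl_elems U L S (take k p0) [::].
have Pi : `[< (forall u, u \in S -> L i u) /\ ~ finite_set (inter L (rcons I1 i)) >].
  apply/asboolP; split => // fin.
  have E : inter L (rcons I1 i) = inter L (i :: I1).
    by apply: inter_eq => k'; rewrite mem_rcons.
  rewrite E in fin.
  have HD : forall d, d \in I1 -> (index d p0 < index i p0)%N.
    move=> d /HI1 [//|[dt _]]; exact: index_take_lt dt.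
  have := Hinv i ip I1 HD fin; rewrite Hms => Hle.
  suff : (cardS x t <= Defs.fcard (inter L (i :: I1)))%N.
    move: Hcard; rewrite geq_max => /andP [_ h] H.
    by move: (leq_ltn_trans (leq_trans H Hle) h); rewrite ltnn.
  rewrite /cardS /Defs.fcard -card_fseq; apply: fsubset_leq_card.
  apply/fsubsetP => u; rewrite in_fset /= => uS.
  rewrite in_fset_set // inE => k'; rewrite inE => /orP [/eqP ->|kI].
    exact: SL.
  by have [//|[_ ]] := HI1 k' kI; apply.
have iI : i \in build_I L S p0.
  have -> : build_I L S p0 = foldl (stepF U L S) [::] p0 by [].
  rewrite Edec foldl_cat -/I1 /=.
  have -> : stepF U L S I1 i = rcons I1 i by rewrite /stepF Pi.
  by apply: foldl_sub; rewrite mem_rcons inE eqxx.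
move: Hout; rewrite -/p0.
case E: (build_I L S p0) => [|a l]; first by rewrite E in iI.
by move=> H; apply: H; rewrite -E.
Qed.
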